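(* For every subset $A \subseteq \overline{\mathbb{Q}}$ there is a transcendental entire function $f$ such that $S_{f^{(s)}} = A$ for every integer $s \geq 0$.
   Context: $\overline{\mathbb{Q}}$ denotes the set of algebraic numbers in $\mathbb{C}$. For an entire function $g$, its exceptional set is $S_g = \{\alpha \in \overline{\mathbb{Q}} : g(\alpha) \in \overline{\mathbb{Q}}\}$. A transcendental entire function is an entire function $\mathbb{C}\to\mathbb{C}$ that is not a polynomial. $f^{(s)}$ denotes the $s$-th derivative of $f$, with $f^{(0)}=f$. *)

(* Defs.v *)
From Stdlib Require Import Reals Lra ZArith List.
Open Scope R_scope.

Definition CC : Type := (R * R)%type.
Definition Cre (z : CC) : R := fst z.
Definition Cim (z : CC) : R := snd z.
Definition RtoC (x : R) : CC := (x, 0).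
Definition C0 : CC := (0, 0).
Definition Cadd (z w : CC) : CC := (fst z + fst w, snd z + snd w).
Definition Copp (z : CC) : CC := (- fst z, - snd z).
Definition Csub (z w : CC) : CC := Cadd z (Copp w).
Definition Cmul (z w : CC) : CC :=
  (fst z * fst w - snd z * snd w, fst z * snd w + snd z * fst w).
Definition Cmod (z : CC) : R := sqrt (fst z * fst z + snd z * snd z).

Definition has_cderiv (f : CC -> CC) (z l : CC) : Prop :=
  forall eps : R, 0 < eps -> exists delta : R, 0 < delta /\
    forall h : CC, Cmod h < delta ->
      Cmod (Csub (Csub (f (Cadd z h)) (f z)) (Cmul l h)) <= eps * Cmod h.

Definition cdifferentiable (f : CC -> CC) (z : CC) : Prop :=
  exists l, has_cderiv f z l.

Definition entire (f : CC -> CC) : Prop := forall z, cdifferentiable f z.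

Fixpoint Cpoly_eval (l : list CC) (z : CC) : CC :=
  match l with
  | nil => C0
  | a :: l' => Cadd a (Cmul z (Cpoly_eval l' z))
  end.

Definition is_polynomial_fun (f : CC -> CC) : Prop :=
  exists l : list CC, forall z, f z = Cpoly_eval l z.

Definition transcendental_entire (f : CC -> CC) : Prop :=
  entire f /\ ~ is_polynomial_fun f.

Definition algebraic (z : CC) : Prop :=
  exists l : list Z, Exists (fun k => k <> 0%Z) l /\
    Cpoly_eval (map (fun k => RtoC (IZR k)) l) z = C0.

Definition exceptional_set (g : CC -> CC) (alpha : CC) : Prop :=
  algebraic alpha /\ algebraic (g alpha).

Definition derivative_sequence (f : CC -> CC) (D : nat -> CC -> CC) : Prop :=
  D 0%nat = f /\ forall (s : nat) (z : CC), has_cderiv (D s) z (D (S s) z).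

(* Main.v *)
Require Import Defs.
From Stdlib Require Import Reals ZArith List.
From Stdlib Require Import Lra Lia Psatz Classical ClassicalEpsilon FunctionalExtensionality Cantor.
Open Scope R_scope.


Ltac csimpl := unfold Csub, Cadd, Copp, Cmul, C0, RtoC in *; simpl in *.
Ltac cring := repeat match goal with z : CC |- _ => destruct z end; csimpl; f_equal; ring.

Fixpoint ladd (x y : list CC) : list CC :=
  match x, y with
  | nil, _ => y
  | _, nil => x
  | a :: x', b :: y' => Cadd a b :: ladd x' y'
  end.
Definition lscale (c : CC) (l : list CC) : list CC := map (Cmul c) l.
Definition lin_mul (a : CC) (l : list CC) : list CC := ladd (C0 :: l) (lscale (Copp a) l).
Fixpoint deriv (l : list CC) : list CC :=
  match l with
  | nil => nil
  | a :: l' => ladd l' (C0 :: deriv l')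
  end.
Definition derivn (n : nat) (l : list CC) : list CC := Nat.iter n deriv l.

Notation ev := Cpoly_eval.

Lemma ladd_nil_r x : ladd x nil = x.
Proof. destruct x; reflexivity. Qed.

Lemma eval_ladd x y z : ev (ladd x y) z = Cadd (ev x z) (ev y z).
Proof.
  revert y; induction x as [|a x IH]; intros [|b y]; simpl; try (cring; fail).
  rewrite IH. cring.
Qed.

Lemma eval_lscale c l z : ev (lscale c l) z = Cmul c (ev l z).
Proof. induction l as [|a l IH]; simpl; [cring|]. unfold lscale in *. simpl. rewrite IH. cring. Qed.

Lemma eval_lin_mul a l z : ev (lin_mul a l) z = Cmul (Csub z a) (ev l z).
Proof. unfold lin_mul. rewrite eval_ladd, eval_lscale. simpl. cring. Qed.

Lemma ladd_assoc x y w : ladd x (ladd y w) = ladd (ladd x y) w.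
Proof.
  revert y w; induction x as [|a x IH]; intros [|b y] [|c w]; simpl; try reflexivity.
  rewrite IH. f_equal. cring.
Qed.

Lemma ladd_comm x y : ladd x y = ladd y x.
Proof.
  revert y; induction x as [|a x IH]; intros [|b y]; simpl; try reflexivity.
  rewrite IH. f_equal. cring.
Qed.

Lemma ladd_00 x y : ladd (C0 :: x) (C0 :: y) = C0 :: ladd x y.
Proof. simpl. f_equal. cring. Qed.

Lemma deriv_ladd x y : deriv (ladd x y) = ladd (deriv x) (deriv y).
Proof.
  revert y; induction x as [|a x IH]; intros [|b y]; simpl; try reflexivity.
  - rewrite ladd_nil_r. reflexivity.
  - rewrite IH. rewrite <- ladd_00.
    rewrite !ladd_assoc. f_equal.
    rewrite <- !ladd_assoc. f_equal. apply ladd_comm.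
Qed.

Lemma lscale_ladd c x y : lscale c (ladd x y) = ladd (lscale c x) (lscale c y).
Proof.
  revert y; induction x as [|a x IH]; intros [|b y]; simpl; try reflexivity.
  unfold lscale in *; simpl. rewrite IH. f_equal. cring.
Qed.

Lemma deriv_lscale c l : deriv (lscale c l) = lscale c (deriv l).
Proof.
  induction l as [|a l IH]; simpl; [reflexivity|].
  change (deriv (lscale c l)) with (deriv (map (Cmul c) l)) in IH.
  change (deriv (Cmul c a :: map (Cmul c) l) = lscale c (ladd l (C0 :: deriv l))).
  simpl. rewrite lscale_ladd. change (map (Cmul c) l) with (lscale c l).
  f_equal. unfold lscale at 1. rewrite IH. unfold lscale. simpl. f_equal. cring.
Qed.

Lemma deriv_lin_mul a l : deriv (lin_mul a l) = ladd l (lin_mul a (deriv l)).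
Proof.
  unfold lin_mul. rewrite deriv_ladd, deriv_lscale.
  change (deriv (C0::l)) with (ladd l (C0::deriv l)).
  rewrite <- ladd_assoc; reflexivity.
Qed.

Lemma eval_derivn_ladd s x y z :
  ev (derivn s (ladd x y)) z = Cadd (ev (derivn s x) z) (ev (derivn s y) z).
Proof.
  revert x y; induction s as [|s IH]; intros x y; simpl.
  - apply eval_ladd.
  - unfold derivn in *. simpl. rewrite <- !Nat.iter_swap.
    rewrite deriv_ladd. apply IH.
Qed.

Lemma derivn_S s l : derivn (S s) l = derivn s (deriv l).
Proof. unfold derivn. simpl. rewrite Nat.iter_swap. reflexivity. Qed.

Lemma eval_derivn_lin_mul s a l z :
  ev (derivn (S s) (lin_mul a l)) z =
  Cadd (Cmul (RtoC (INR (S s))) (ev (derivn s l) z)) (Cmul (Csub z a) (ev (derivn (S s) l) z)).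
Proof.
  revert l; induction s as [|s IH]; intros l.
  - rewrite derivn_S. simpl. rewrite deriv_lin_mul, eval_ladd, eval_lin_mul. cring.
  - rewrite derivn_S, deriv_lin_mul, eval_derivn_ladd, IH.
    rewrite <- !derivn_S. rewrite (S_INR (S s)). cring.
Qed.


Lemma Cmul_eq0 x y : Cmul x y = C0 -> x = C0 \/ y = C0.
Proof.
  destruct x as [a b], y as [c d]. unfold Cmul, C0; simpl. intro H. injection H as H1 H2.
  assert (E : (a*a+b*b)*(c*c+d*d) = 0).
  { replace ((a*a+b*b)*(c*c+d*d)) with ((a*c-b*d)*(a*c-b*d) + (a*d+b*c)*(a*d+b*c)) by ring.
    rewrite H1, H2. ring. }
  apply Rmult_integral in E. destruct E as [E|E]; [left|right]; f_equal; nra.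
Qed.

Lemma Cmul_neq0 x y : x <> C0 -> y <> C0 -> Cmul x y <> C0.
Proof. intros Hx Hy H. destruct (Cmul_eq0 _ _ H); auto. Qed.

Definition Ceq_dec (x y : CC) : {x = y} + {x <> y}.
Proof.
  destruct x as [a b], y as [c d].
  destruct (Req_EM_T a c) as [->|H]; [|right; intro E; injection E; auto].
  destruct (Req_EM_T b d) as [->|H]; [left; reflexivity|right; intro E; injection E; auto].
Defined.

Lemma Csub_self a : Csub a a = C0.
Proof. cring. Qed.

Lemma Csub_neq0 a b : a <> b -> Csub a b <> C0.
Proof.
  destruct a as [x y], b as [u v]. unfold Csub, Cadd, Copp, C0; simpl. intros H E.
  injection E as E1 E2. apply H. f_equal; lra.
Qed.

Lemma RtoC_INR_S_neq0 n : RtoC (INR (S n)) <> C0.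
Proof. intro E. pose proof (f_equal fst E) as E'. unfold RtoC, C0 in E'. cbn [fst] in E'.
  pose proof (lt_0_INR (S n) ltac:(lia)). lra. Qed.

Definition has_order (l : list CC) (a : CC) (m : nat) : Prop :=
  (forall s, (s < m)%nat -> ev (derivn s l) a = C0) /\ ev (derivn m l) a <> C0.

Lemma Cmul_0_r x : Cmul x C0 = C0. Proof. cring. Qed.
Lemma Cmul_0_l x : Cmul C0 x = C0. Proof. cring. Qed.
Lemma Cadd_0_l x : Cadd C0 x = x. Proof. cring. Qed.
Lemma Cadd_0_r x : Cadd x C0 = x. Proof. cring. Qed.

Lemma order_lin_mul_same l a m : has_order l a m -> has_order (lin_mul a l) a (S m).
Proof.
  intros [H1 H2]. split.
  - intros [|s] Hs.
    + simpl. rewrite eval_lin_mul, Csub_self. apply Cmul_0_l.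
    + rewrite eval_derivn_lin_mul, Csub_self, Cmul_0_l, Cadd_0_r, H1 by lia. apply Cmul_0_r.
  - rewrite eval_derivn_lin_mul, Csub_self, Cmul_0_l, Cadd_0_r.
    apply Cmul_neq0; auto. apply RtoC_INR_S_neq0.
Qed.

Lemma order_lin_mul_other l a b m : b <> a -> has_order l a m -> has_order (lin_mul b l) a m.
Proof.
  intros Hab [H1 H2]. split.
  - intros [|s] Hs.
    + simpl. rewrite eval_lin_mul. pose proof (H1 0%nat ltac:(lia)) as H0. simpl in H0.
      rewrite H0. apply Cmul_0_r.
    + rewrite eval_derivn_lin_mul, !H1 by lia. rewrite !Cmul_0_r. apply Cadd_0_l.
  - destruct m as [|m].
    + simpl. rewrite eval_lin_mul. apply Cmul_neq0; auto. apply Csub_neq0; auto.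
    + rewrite eval_derivn_lin_mul, H1 by lia. rewrite Cmul_0_r, Cadd_0_l.
      apply Cmul_neq0; auto. apply Csub_neq0; auto.
Qed.

Fixpoint Qpoly (p : nat -> CC) (k : nat) : list CC :=
  match k with
  | O => RtoC 1 :: nil
  | S k => lin_mul (p k) (Qpoly p k)
  end.

Fixpoint cnt (p : nat -> CC) (a : CC) (k : nat) : nat :=
  match k with
  | O => O
  | S k => (cnt p a k + if Ceq_dec (p k) a then 1 else 0)%nat
  end.

Lemma Q_order p k a : has_order (Qpoly p k) a (cnt p a k).
Proof.
  induction k as [|k IH]; simpl.
  - split; [intros s Hs; lia|]. simpl. unfold RtoC, C0; csimpl. intro E; injection E; lra.
  - destruct (Ceq_dec (p k) a) as [E|E].
    + rewrite Nat.add_1_r. subst. apply order_lin_mul_same; auto.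
    + rewrite Nat.add_0_r. apply order_lin_mul_other; auto.
Qed.

Lemma cnt_mono p a k l : (k <= l)%nat -> (cnt p a k <= cnt p a l)%nat.
Proof. induction 1; simpl; lia. Qed.

Lemma Q_vanish p k l : (k < l)%nat -> ev (derivn (cnt p (p k) k) (Qpoly p l)) (p k) = C0.
Proof.
  intros H. destruct (Q_order p l (p k)) as [H1 _]. apply H1.
  pose proof (cnt_mono p (p k) (S k) l H). simpl in H0.
  destruct (Ceq_dec (p k) (p k)); [lia|congruence].
Qed.

Lemma Q_nonvanish p k : ev (derivn (cnt p (p k) k) (Qpoly p k)) (p k) <> C0.
Proof. apply (Q_order p k (p k)). Qed.


Definition N1 (z : CC) : R := Rabs (fst z) + Rabs (snd z).

Lemma N1_nonneg z : 0 <= N1 z.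
Proof. unfold N1. pose proof (Rabs_pos (fst z)); pose proof (Rabs_pos (snd z)). lra. Qed.

Lemma N1_add x y : N1 (Cadd x y) <= N1 x + N1 y.
Proof.
  destruct x as [a b], y as [c d]; unfold N1, Cadd; simpl.
  pose proof (Rabs_triang a c); pose proof (Rabs_triang b d). lra.
Qed.

Lemma N1_opp x : N1 (Copp x) = N1 x.
Proof. destruct x; unfold N1, Copp; simpl; rewrite !Rabs_Ropp; reflexivity. Qed.

Lemma N1_sub x y : N1 (Csub x y) <= N1 x + N1 y.
Proof. unfold Csub. rewrite <- (N1_opp y). apply N1_add. Qed.

Lemma N1_mul x y : N1 (Cmul x y) <= N1 x * N1 y.
Proof.
  destruct x as [a b], y as [c d]; unfold N1, Cmul; simpl.
  unfold Rminus.
  pose proof (Rabs_triang (a*c) (-(b*d))); pose proof (Rabs_triang (a*d) (b*c)).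
  rewrite Rabs_Ropp in H. rewrite !Rabs_mult in *.
  pose proof (Rabs_pos a); pose proof (Rabs_pos b); pose proof (Rabs_pos c); pose proof (Rabs_pos d).
  nra.
Qed.

Lemma N1_C0 : N1 C0 = 0.
Proof. unfold N1, C0; simpl. rewrite Rabs_R0. ring. Qed.

Lemma Cmod_le_N1 z : Cmod z <= N1 z.
Proof.
  destruct z as [a b]; unfold Cmod, N1; simpl.
  pose proof (Rabs_pos a); pose proof (Rabs_pos b).
  rewrite <- (sqrt_Rsqr (Rabs a + Rabs b)) by lra.
  apply sqrt_le_1_alt. unfold Rsqr.
  assert (Rabs a * Rabs a = a*a) by (rewrite <- Rabs_mult; apply Rabs_right; nra).
  assert (Rabs b * Rabs b = b*b) by (rewrite <- Rabs_mult; apply Rabs_right; nra).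
  nra.
Qed.

Lemma abs_le_Cmod_fst z : Rabs (fst z) <= Cmod z.
Proof.
  destruct z as [a b]; unfold Cmod; simpl.
  rewrite <- sqrt_Rsqr_abs. apply sqrt_le_1_alt. unfold Rsqr. nra.
Qed.

Lemma abs_le_Cmod_snd z : Rabs (snd z) <= Cmod z.
Proof.
  destruct z as [a b]; unfold Cmod; simpl.
  rewrite <- sqrt_Rsqr_abs. apply sqrt_le_1_alt. unfold Rsqr. nra.
Qed.

Lemma N1_le_Cmod z : N1 z <= 2 * Cmod z.
Proof. unfold N1. pose proof (abs_le_Cmod_fst z); pose proof (abs_le_Cmod_snd z). lra. Qed.

Fixpoint M0 (r : R) (l : list CC) : R :=
  match l with nil => 0 | a :: l' => N1 a + r * M0 r l' end.
Fixpoint M1 (r : R) (l : list CC) : R :=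
  match l with nil => 0 | a :: l' => M0 r l' + r * M1 r l' end.
Fixpoint M2 (r : R) (l : list CC) : R :=
  match l with nil => 0 | a :: l' => M1 r l' + r * M2 r l' end.

Lemma M_nonneg r l : 0 <= r -> 0 <= M0 r l /\ 0 <= M1 r l /\ 0 <= M2 r l.
Proof.
  intros Hr. induction l as [|a l [H0 [H1 H2]]]; simpl; [lra|].
  pose proof (N1_nonneg a). repeat split; nra.
Qed.

Lemma M_mono r r' l : 0 <= r -> r <= r' ->
  M0 r l <= M0 r' l /\ M1 r l <= M1 r' l /\ M2 r l <= M2 r' l.
Proof.
  intros Hr Hrr. induction l as [|a l [H0 [H1 H2]]]; simpl; [lra|].
  destruct (M_nonneg r l Hr) as [A0 [A1 A2]].
  repeat split; nra.
Qed.

Lemma ev_deriv_cons a l z : ev (deriv (a :: l)) z = Cadd (ev l z) (Cmul z (ev (deriv l) z)).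
Proof. simpl. rewrite eval_ladd. simpl. cring. Qed.

Lemma bound0 r l z : N1 z <= r -> N1 (ev l z) <= M0 r l.
Proof.
  intros Hz. induction l as [|a l IH]; simpl.
  - rewrite N1_C0; lra.
  - eapply Rle_trans; [apply N1_add|]. eapply Rle_trans; [apply Rplus_le_compat_l, N1_mul|].
    pose proof (N1_nonneg z). pose proof (N1_nonneg (ev l z)). nra.
Qed.

Lemma N1_add_le z h r : N1 z + N1 h <= r -> N1 (Cadd z h) <= r.
Proof. intros. pose proof (N1_add z h). lra. Qed.

Lemma bound1 r l z h : N1 z + N1 h <= r ->
  N1 (Csub (ev l (Cadd z h)) (ev l z)) <= N1 h * M1 r l.
Proof.
  intros Hr. induction l as [|a l IH]; simpl.
  - replace (Csub C0 C0) with C0 by cring. rewrite N1_C0; lra.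
  - replace (Csub (Cadd a (Cmul (Cadd z h) (ev l (Cadd z h)))) (Cadd a (Cmul z (ev l z))))
      with (Cadd (Cmul z (Csub (ev l (Cadd z h)) (ev l z))) (Cmul h (ev l (Cadd z h)))) by cring.
    eapply Rle_trans; [apply N1_add|].
    pose proof (N1_mul z (Csub (ev l (Cadd z h)) (ev l z))).
    pose proof (N1_mul h (ev l (Cadd z h))).
    pose proof (bound0 r l (Cadd z h) (N1_add_le _ _ _ Hr)).
    pose proof (N1_nonneg z). pose proof (N1_nonneg h).
    pose proof (N1_nonneg (Csub (ev l (Cadd z h)) (ev l z))).
    assert (N1 z <= r) by (pose proof (N1_nonneg h); lra).
    nra.
Qed.

Lemma bound2 r l z h : N1 z + N1 h <= r ->
  N1 (Csub (Csub (ev l (Cadd z h)) (ev l z)) (Cmul (ev (deriv l) z) h)) <= N1 h * N1 h * M2 r l.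
Proof.
  intros Hr. induction l as [|a l IH].
  - simpl. replace (Csub (Csub C0 C0) (Cmul C0 h)) with C0 by cring. rewrite N1_C0; lra.
  - rewrite ev_deriv_cons. simpl ev.
    replace (Csub (Csub (Cadd a (Cmul (Cadd z h) (ev l (Cadd z h)))) (Cadd a (Cmul z (ev l z))))
               (Cmul (Cadd (ev l z) (Cmul z (ev (deriv l) z))) h))
      with (Cadd (Cmul z (Csub (Csub (ev l (Cadd z h)) (ev l z)) (Cmul (ev (deriv l) z) h)))
                 (Cmul h (Csub (ev l (Cadd z h)) (ev l z)))) by cring.
    eapply Rle_trans; [apply N1_add|].
    pose proof (N1_mul z (Csub (Csub (ev l (Cadd z h)) (ev l z)) (Cmul (ev (deriv l) z) h))).
    pose proof (N1_mul h (Csub (ev l (Cadd z h)) (ev l z))).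
    pose proof (bound1 r l z h Hr).
    pose proof (N1_nonneg z). pose proof (N1_nonneg h).
    pose proof (N1_nonneg (Csub (Csub (ev l (Cadd z h)) (ev l z)) (Cmul (ev (deriv l) z) h))).
    assert (N1 z <= r) by (pose proof (N1_nonneg h); lra).
    simpl M2. nra.
Qed.


Definition conv (u : nat -> R) : Prop := exists l, Un_cv (fun N => sum_f_R0 u N) l.

Definition rsum (u : nat -> R) : R :=
  match excluded_middle_informative (conv u) with
  | left H => proj1_sig (constructive_indefinite_description _ H)
  | right _ => 0
  end.

Lemma rsum_spec u : conv u -> Un_cv (fun N => sum_f_R0 u N) (rsum u).
Proof.
  intros H. unfold rsum. destruct (excluded_middle_informative (conv u)); [|contradiction].
  apply (proj2_sig (constructive_indefinite_description _ c)).
Qed.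

Lemma rsum_unique u l : Un_cv (fun N => sum_f_R0 u N) l -> rsum u = l.
Proof.
  intros H. assert (Hc : conv u) by (exists l; auto).
  eapply UL_sequence; [apply rsum_spec; auto| exact H].
Qed.



Lemma sum_nonneg f N : (forall k, 0 <= f k) -> 0 <= sum_f_R0 f N.
Proof. intros Hf. induction N; simpl; [apply Hf|]. pose proof (Hf (S N)); lra. Qed.

Lemma term_le_sum f N j : (forall k, 0 <= f k) -> (j <= N)%nat -> f j <= sum_f_R0 f N.
Proof.
  intros Hf. induction N as [|N IH]; intros Hj.
  - assert (j = 0%nat) by lia. subst. simpl. lra.
  - simpl. destruct (Nat.eq_dec j (S N)) as [->|Hne].
    + pose proof (sum_nonneg f N Hf). lra.
    + pose proof (Hf (S N)). pose proof (IH ltac:(lia)). lra.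
Qed.

Lemma geom_conv C : conv (fun k => C * (/2)^k).
Proof.
  pose proof (GP_infinite (/2) ltac:(rewrite Rabs_right; lra)) as H.
  exists (C * / (1 - /2)). intros eps Heps.
  destruct (Req_dec C 0) as [->|HC].
  - exists 0%nat. intros n _. unfold Rdist.
    rewrite (sum_eq _ (fun _ => 0)) by (intros; ring).
    replace (sum_f_R0 (fun _ => 0) n) with 0.
    + rewrite Rmult_0_l, Rminus_diag, Rabs_R0. lra.
    + induction n; simpl; [reflexivity| rewrite <- IHn; ring].
  - destruct (H (eps / Rabs C)) as [N HN].
    { apply Rdiv_lt_0_compat; auto. apply Rabs_pos_lt; auto. }
    exists N. intros n Hn. specialize (HN n Hn). unfold Rdist in *.
    rewrite (sum_eq _ (fun i => (1 * (/2)^i) * C)) by (intros; ring).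
    rewrite <- scal_sum.
    replace (C * sum_f_R0 (fun n0 => 1 * (/ 2) ^ n0) n - C * / (1 - / 2))
      with (C * (sum_f_R0 (fun n0 => 1 * (/ 2) ^ n0) n - / (1 - / 2))) by ring.
    rewrite Rabs_mult.
    apply Rmult_lt_compat_l with (r := Rabs C) in HN; [|apply Rabs_pos_lt; auto].
    replace (Rabs C * (eps / Rabs C)) with eps in HN; [lra|].
    field. apply Rabs_no_R0; auto.
Qed.

Lemma conv_abs_dom u t : (forall k, Rabs (u k) <= t k) -> conv t -> conv u.
Proof.
  intros Hut [l Hl].
  assert (H1 : { l | Un_cv (fun N => sum_f_R0 (fun k => Rabs (u k)) N) l }).
  { apply (Rseries_CV_comp _ t). intros n; split; [apply Rabs_pos|apply Hut]. exists l; auto. }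
  apply CV_Cauchy in H1. apply cauchy_abs in H1. apply R_complete in H1.
  destruct H1 as [l' Hl']. exists l'; auto.
Qed.

Lemma conv_eventually u K : (forall k, (K <= k)%nat -> Rabs (u k) <= (/2)^k) -> conv u.
Proof.
  intros H.
  set (S := sum_f_R0 (fun j => Rabs (u j) * 2^j) K).
  apply conv_abs_dom with (t := fun k => (1 + S) * (/2)^k); [|apply geom_conv].
  intros k. assert (HS : 0 <= S) by (apply sum_nonneg; intros; pose proof (Rabs_pos (u k0)); pose proof (pow_le 2 k0); nra).
  assert (Hp : 0 < (/2)^k) by (apply pow_lt; lra).
  destruct (le_lt_dec K k) as [Hk|Hk].
  - specialize (H k Hk). nra.
  - assert (Rabs (u k) * 2^k <= S).
    { apply (term_le_sum (fun j => Rabs (u j) * 2^j)); [|lia].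
      intros j. pose proof (Rabs_pos (u j)); pose proof (pow_le 2 j); nra. }
    assert (E : Rabs (u k) = Rabs (u k) * 2^k * (/2)^k).
    { rewrite Rmult_assoc, <- Rpow_mult_distr. replace (2 * /2) with 1 by field. rewrite pow1. ring. }
    rewrite E. nra.
Qed.

Lemma cst_cv a : Un_cv (fun _ => a) a.
Proof. intros e He. exists 0%nat. intros n _. unfold Rdist. rewrite Rminus_diag, Rabs_R0. exact He. Qed.

Lemma rsum_lin a b u v : conv u -> conv v ->
  conv (fun k => a * u k + b * v k) /\ rsum (fun k => a * u k + b * v k) = a * rsum u + b * rsum v.
Proof.
  intros Hu Hv.
  assert (H : Un_cv (fun N => sum_f_R0 (fun k => a * u k + b * v k) N) (a * rsum u + b * rsum v)).
  { apply rsum_spec in Hu. apply rsum_spec in Hv.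
    pose proof (CV_mult (fun _ => a) _ a _ (cst_cv a) Hu) as Ha.
    pose proof (CV_mult (fun _ => b) _ b _ (cst_cv b) Hv) as Hb.
    pose proof (CV_plus _ _ _ _ Ha Hb) as Hab.
    intros eps Heps. destruct (Hab eps Heps) as [N HN]. exists N. intros n Hn.
    specialize (HN n Hn). rewrite sum_plus.
    rewrite (sum_eq (fun k => a * u k) (fun k => u k * a)) by (intros; ring).
    rewrite (sum_eq (fun k => b * v k) (fun k => v k * b)) by (intros; ring).
    rewrite <- !scal_sum. auto. }
  split; [exists (a * rsum u + b * rsum v); auto|]. apply rsum_unique; auto.
Qed.

Lemma sum_stable u K N : (forall k, (K < k)%nat -> u k = 0) -> (K <= N)%nat ->
  sum_f_R0 u N = sum_f_R0 u K.
Proof.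
  intros H. induction 1 as [|N HN IH]; [reflexivity|]. simpl. rewrite IH, H by lia. ring.
Qed.

Lemma rsum_finite u K : (forall k, (K < k)%nat -> u k = 0) -> rsum u = sum_f_R0 u K.
Proof.
  intros H. apply rsum_unique. intros eps Heps. exists K. intros n Hn.
  rewrite (sum_stable u K n H Hn). unfold Rdist. rewrite Rminus_diag, Rabs_R0. auto.
Qed.

Lemma rsum_bound u t : conv u -> conv t -> (forall k, Rabs (u k) <= t k) -> Rabs (rsum u) <= rsum t.
Proof.
  intros Hu Ht H. apply Rabs_le. split.
  - pose proof (CV_opp _ _ (rsum_spec t Ht)) as H1.
    refine (Rle_cv_lim _ H1 (rsum_spec u Hu)).
    intros n. unfold opp_seq.
    assert (E : sum_f_R0 (fun k => u k * (-1)) n = - sum_f_R0 u n) by (rewrite <- scal_sum; ring).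
    assert (sum_f_R0 (fun k => u k * (-1)) n <= sum_f_R0 t n).
    { apply sum_Rle. intros k _. specialize (H k). pose proof (Rle_abs (u k)); pose proof (Rle_abs (- u k)); rewrite Rabs_Ropp in *; lra. }
    lra.
  - refine (Rle_cv_lim _ (rsum_spec u Hu) (rsum_spec t Ht)).
    intros n. apply sum_Rle. intros k _. specialize (H k). pose proof (Rle_abs (u k)); pose proof (Rle_abs (- u k)); rewrite Rabs_Ropp in *; lra.
Qed.


Definition CSum (w : nat -> CC) : CC := (rsum (fun k => fst (w k)), rsum (fun k => snd (w k))).
Definition Cconv (w : nat -> CC) : Prop := conv (fun k => fst (w k)) /\ conv (fun k => snd (w k)).

Lemma fst_le_N1 z : Rabs (fst z) <= N1 z.
Proof. unfold N1. pose proof (Rabs_pos (snd z)). lra. Qed.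
Lemma snd_le_N1 z : Rabs (snd z) <= N1 z.
Proof. unfold N1. pose proof (Rabs_pos (fst z)). lra. Qed.

Lemma Cconv_eventually w K : (forall k, (K <= k)%nat -> N1 (w k) <= (/2)^k) -> Cconv w.
Proof.
  intros H. split; apply (conv_eventually _ K); intros k Hk;
  [pose proof (fst_le_N1 (w k))|pose proof (snd_le_N1 (w k))]; specialize (H k Hk); lra.
Qed.

Lemma CSum_add u v : Cconv u -> Cconv v ->
  Cconv (fun k => Cadd (u k) (v k)) /\ CSum (fun k => Cadd (u k) (v k)) = Cadd (CSum u) (CSum v).
Proof.
  intros [H1 H2] [H3 H4].
  destruct (rsum_lin 1 1 _ _ H1 H3) as [A1 B1].
  destruct (rsum_lin 1 1 _ _ H2 H4) as [A2 B2].
  assert (E1 : (fun k => fst (Cadd (u k) (v k))) = (fun k => 1 * fst (u k) + 1 * fst (v k)))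
    by (apply functional_extensionality; intros; unfold Cadd; simpl; ring).
  assert (E2 : (fun k => snd (Cadd (u k) (v k))) = (fun k => 1 * snd (u k) + 1 * snd (v k)))
    by (apply functional_extensionality; intros; unfold Cadd; simpl; ring).
  unfold Cconv, CSum. rewrite E1, E2. split; [split; auto|].
  rewrite B1, B2. unfold Cadd; simpl. f_equal; ring.
Qed.

Lemma CSum_mulr u c : Cconv u ->
  Cconv (fun k => Cmul (u k) c) /\ CSum (fun k => Cmul (u k) c) = Cmul (CSum u) c.
Proof.
  intros [H1 H2].
  destruct (rsum_lin (fst c) (- snd c) _ _ H1 H2) as [A1 B1].
  destruct (rsum_lin (snd c) (fst c) _ _ H1 H2) as [A2 B2].
  assert (E1 : (fun k => fst (Cmul (u k) c)) = (fun k => fst c * fst (u k) + - snd c * snd (u k)))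
    by (apply functional_extensionality; intros; unfold Cmul; simpl; ring).
  assert (E2 : (fun k => snd (Cmul (u k) c)) = (fun k => snd c * fst (u k) + fst c * snd (u k)))
    by (apply functional_extensionality; intros; unfold Cmul; simpl; ring).
  unfold Cconv, CSum. rewrite E1, E2. split; [split; auto|].
  rewrite B1, B2. unfold Cmul; simpl. f_equal; ring.
Qed.

Lemma CSum_sub u v : Cconv u -> Cconv v ->
  Cconv (fun k => Csub (u k) (v k)) /\ CSum (fun k => Csub (u k) (v k)) = Csub (CSum u) (CSum v).
Proof.
  intros Hu Hv.
  destruct (CSum_mulr v (RtoC (-1)) Hv) as [A B].
  destruct (CSum_add u _ Hu A) as [A2 B2].
  assert (E : (fun k => Csub (u k) (v k)) = (fun k => Cadd (u k) (Cmul (v k) (RtoC (-1)))))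
    by (apply functional_extensionality; intros; cring).
  rewrite E. split; auto. rewrite B2, B. cring.
Qed.

Lemma CSum_bound w t : Cconv w -> conv t -> (forall k, N1 (w k) <= t k) -> N1 (CSum w) <= 2 * rsum t.
Proof.
  intros [H1 H2] Ht H. unfold N1 at 1, CSum; simpl.
  pose proof (rsum_bound _ t H1 Ht (fun k => Rle_trans _ _ _ (fst_le_N1 (w k)) (H k))).
  pose proof (rsum_bound _ t H2 Ht (fun k => Rle_trans _ _ _ (snd_le_N1 (w k)) (H k))).
  lra.
Qed.

Fixpoint lsum (f : nat -> CC) (n : nat) : CC :=
  match n with O => C0 | S n => Cadd (lsum f n) (f n) end.

Lemma CSum_finite w K : (forall k, (K < k)%nat -> w k = C0) -> CSum w = Cadd (lsum w K) (w K).
Proof.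
  intros H. unfold CSum.
  rewrite (rsum_finite _ K) by (intros k Hk; rewrite H by auto; reflexivity).
  rewrite (rsum_finite (fun k => snd (w k)) K) by (intros k Hk; rewrite H by auto; reflexivity).
  clear H. induction K as [|K IH].
  - simpl. cring.
  - simpl sum_f_R0. simpl lsum. 
    transitivity (Cadd (sum_f_R0 (fun k => fst (w k)) K, sum_f_R0 (fun k => snd (w k)) K) (w (S K))).
    + destruct (w (S K)). unfold Cadd; simpl. reflexivity.
    + rewrite IH. destruct (w (S K)), (w K), (lsum w K). unfold Cadd; simpl. f_equal; ring.
Qed.

Lemma rsum_nonneg t : conv t -> (forall k, 0 <= t k) -> 0 <= rsum t.
Proof.
  intros Ht H. pose proof (rsum_bound (fun _ => 0) t) as B.
  assert (conv (fun _ : nat => 0)).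
  { exists 0. intros e He. exists 0%nat. intros n _. unfold Rdist.
    replace (sum_f_R0 (fun _ => 0) n) with 0; [rewrite Rminus_diag, Rabs_R0; auto|].
    induction n; simpl; [reflexivity|rewrite <- IHn; ring]. }
  specialize (B H0 Ht). assert (forall k, Rabs 0 <= t k) by (intros; rewrite Rabs_R0; auto).
  specialize (B H1). pose proof (Rabs_pos (rsum (fun _ => 0))). lra.
Qed.


Fixpoint sdiv (a : CC) (l : list CC) : list CC :=
  match l with
  | nil => nil
  | b :: l' => match l' with nil => nil | _ => ev l' a :: sdiv a l' end
  end.

Lemma sdiv_length a l : length (sdiv a l) = pred (length l).
Proof. induction l as [|b l IH]; simpl; [reflexivity|]. destruct l; simpl in *; [reflexivity|]. rewrite IH. reflexivity. Qed.

Lemma sdiv_spec a l z : ev l z = Cadd (ev l a) (Cmul (Csub z a) (ev (sdiv a l) z)).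
Proof.
  induction l as [|b l IH]; simpl; [cring|].
  destruct l as [|c l'].
  - simpl. cring.
  - change (ev (ev (c :: l') a :: sdiv a (c :: l')) z) with
      (Cadd (ev (c :: l') a) (Cmul z (ev (sdiv a (c :: l')) z))).
    rewrite IH at 1. cring.
Qed.

Lemma ev_allzero l z : Forall (fun x => x = C0) l -> ev l z = C0.
Proof. induction 1; simpl; [reflexivity|]. rewrite IHForall, H. cring. Qed.

Lemma not_Exists_nz l : ~ Exists (fun x => x <> C0) l -> Forall (fun x => x = C0) l.
Proof.
  intros H. apply Forall_forall. intros x Hx. apply NNPP. intro Hne. apply H.
  apply Exists_exists. exists x; auto.
Qed.

Lemma ev_C0 b l : ev (b :: l) C0 = b.
Proof. simpl. cring. Qed.

Lemma roots_finite_aux n : forall l, (length l <= n)%nat -> Exists (fun x => x <> C0) l ->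
  exists L, forall z, ev l z = C0 -> In z L.
Proof.
  induction n as [|n IH]; intros l Hl Hex.
  - destruct l; simpl in Hl; [inversion Hex|lia].
  - destruct l as [|b l']; [inversion Hex|].
    destruct (Ceq_dec b C0) as [Hb|Hb].
    + assert (Hex' : Exists (fun x => x <> C0) l') by (inversion Hex; subst; [contradiction|auto]).
      destruct (IH l' ltac:(simpl in Hl; lia) Hex') as [L HL].
      exists (C0 :: L). intros z Hz. simpl in Hz. rewrite Hb in Hz.
      rewrite Cadd_0_l in Hz. destruct (Cmul_eq0 _ _ Hz) as [->|H]; [left; auto|right; auto].
    + destruct (classic (exists a, ev (b :: l') a = C0)) as [[a Ha]|Hno].
      * set (q := sdiv a (b :: l')).
        assert (Hq : Exists (fun x => x <> C0) q).
        { apply NNPP. intro Hn. apply not_Exists_nz in Hn.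
          pose proof (sdiv_spec a (b :: l') C0) as E. fold q in E.
          rewrite ev_C0, Ha, (ev_allzero q), Cmul_0_r, Cadd_0_l in E by auto. contradiction. }
        assert (Hlq : (length q <= n)%nat) by (unfold q; rewrite sdiv_length; simpl in *; lia).
        destruct (IH q Hlq Hq) as [L HL].
        exists (a :: L). intros z Hz.
        rewrite (sdiv_spec a) in Hz. fold q in Hz. rewrite Ha, Cadd_0_l in Hz.
        destruct (Cmul_eq0 _ _ Hz) as [H|H]; [left|right; auto].
        destruct z, a; unfold Csub, Cadd, Copp, C0 in H; injection H as H1 H2; f_equal; lra.
      * exists nil. intros z Hz. exfalso. apply Hno. exists z; auto.
Qed.

Lemma roots_finite l : Exists (fun x => x <> C0) l -> exists L, forall z, ev l z = C0 -> In z L.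
Proof. apply (roots_finite_aux (length l)); auto. Qed.

Definition zpoly (lz : list Z) : list CC := map (fun k => RtoC (IZR k)) lz.

Lemma zpoly_nz lz : Exists (fun k => k <> 0%Z) lz -> Exists (fun x => x <> C0) (zpoly lz).
Proof.
  induction 1 as [k l Hk|k l _ IH]; simpl.
  - left. unfold RtoC, C0. intro E. injection E as E. apply Hk. apply eq_IZR. auto.
  - right. auto.
Qed.

Definition zdec (n : nat) : Z := let '(a, b) := Cantor.of_nat n in (Z.of_nat a - Z.of_nat b)%Z.

Lemma zdec_surj z : exists n, zdec n = z.
Proof.
  exists (Cantor.to_nat (Z.to_nat z, Z.to_nat (- z))). unfold zdec. rewrite cancel_of_to. lia.
Qed.

Fixpoint ldec_aux (len c : nat) : list Z :=
  match len with
  | O => nil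
  | S len => let '(x, y) := Cantor.of_nat c in zdec x :: ldec_aux len y
  end.

Definition ldec (n : nat) : list Z := let '(len, c) := Cantor.of_nat n in ldec_aux len c.

Lemma ldec_surj l : exists n, ldec n = l.
Proof.
  assert (H : exists c, ldec_aux (length l) c = l).
  { induction l as [|z l [c Hc]]; [exists 0%nat; reflexivity|].
    destruct (zdec_surj z) as [m Hm]. exists (Cantor.to_nat (m, c)). cbn [ldec_aux length]. rewrite cancel_of_to.
    rewrite Hm, Hc. reflexivity. }
  destruct H as [c Hc]. exists (Cantor.to_nat (length l, c)). unfold ldec. rewrite cancel_of_to. auto.
Qed.

Definition rootlist (l : list CC) : list CC :=
  match excluded_middle_informative (Exists (fun x => x <> C0) l) with
  | left H => proj1_sig (constructive_indefinite_description _ (roots_finite l H))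
  | right _ => nil
  end.

Lemma rootlist_spec l : Exists (fun x => x <> C0) l -> forall z, ev l z = C0 -> In z (rootlist l).
Proof.
  intros H. unfold rootlist. destruct (excluded_middle_informative _); [|contradiction].
  apply (proj2_sig (constructive_indefinite_description _ (roots_finite l e))).
Qed.

Definition alpha (n : nat) : CC :=
  let '(i, j) := Cantor.of_nat n in nth j (rootlist (zpoly (ldec i))) C0.

Lemma alpha_surj z : algebraic z -> exists n, alpha n = z.
Proof.
  intros [lz [Hnz Hz]]. destruct (ldec_surj lz) as [i Hi].
  pose proof (rootlist_spec _ (zpoly_nz lz Hnz) z Hz) as Hin.
  destruct (In_nth _ _ C0 Hin) as [j [_ Hj]].
  exists (Cantor.to_nat (i, j)). unfold alpha. rewrite cancel_of_to, Hi. auto.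
Qed.


Definition istep (t : R) (ab : R * R) : R * R :=
  let '(a, b) := ab in
  if Rlt_dec t ((a + b) / 2) then ((a + 2 * b) / 3, b) else (a, (2 * a + b) / 3).

Fixpoint iv (t : nat -> R) (e : R) (n : nat) : R * R :=
  match n with
  | O => (e / 3, 2 * e / 3)
  | S n => istep (t n) (iv t e n)
  end.

Lemma istep_spec t a b : a < b ->
  let '(a', b') := istep t (a, b) in a <= a' /\ a' < b' /\ b' <= b /\ (t < a' \/ b' < t).
Proof.
  intros H. unfold istep. destruct (Rlt_dec t ((a+b)/2)); repeat split; lra.
Qed.

Lemma iv_lt t e n : 0 < e -> fst (iv t e n) < snd (iv t e n).
Proof.
  intros He. induction n as [|n IH].
  - simpl. lra.
  - change (iv t e (S n)) with (istep (t n) (iv t e n)).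
    destruct (iv t e n) as [a b]. simpl in IH.
    pose proof (istep_spec (t n) a b IH). destruct (istep (t n) (a, b)). simpl. lra.
Qed.

Lemma iv_spec t e n : 0 < e ->
  fst (iv t e n) < snd (iv t e n) /\ fst (iv t e n) <= fst (iv t e (S n)) /\ snd (iv t e (S n)) <= snd (iv t e n) /\ (t n < fst (iv t e (S n)) \/ snd (iv t e (S n)) < t n).
Proof.
  intros He. pose proof (iv_lt t e n He) as H.
  change (iv t e (S n)) with (istep (t n) (iv t e n)).
  destruct (iv t e n) as [a b]. simpl in H.
  pose proof (istep_spec (t n) a b H). destruct (istep (t n) (a, b)). simpl. lra.
Qed.

Lemma iv_mono t e n m : 0 < e -> (n <= m)%nat ->
  fst (iv t e n) <= fst (iv t e m) /\ snd (iv t e m) <= snd (iv t e n).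
Proof.
  intros He. induction 1 as [|m Hm IH]; [lra|].
  pose proof (iv_spec t e m He). lra.
Qed.

Lemma iv_ab t e n m : 0 < e -> fst (iv t e n) <= snd (iv t e m).
Proof.
  intros He. destruct (iv_mono t e n (Nat.max n m) He ltac:(lia)) as [A _].
  destruct (iv_mono t e m (Nat.max n m) He ltac:(lia)) as [_ B].
  pose proof (iv_spec t e (Nat.max n m) He). lra.
Qed.

Lemma avoid_countable (t : nat -> R) (e : R) : 0 < e -> exists x, 0 < x < e /\ forall n, x <> t n.
Proof.
  intros He.
  set (E := fun y => exists n, y = fst (iv t e n)).
  assert (Hb : bound E).
  { exists (snd (iv t e 0)). intros y [n ->]. apply iv_ab; auto. }
  assert (Hne : exists y, E y) by (exists (fst (iv t e 0)); exists 0%nat; auto).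
  destruct (completeness E Hb Hne) as [x [Hub Hl]].
  assert (Hlo : forall n, fst (iv t e n) <= x) by (intros n; apply Hub; exists n; auto).
  assert (Hhi : forall m, x <= snd (iv t e m)).
  { intros m. apply Hl. intros y [n ->]. apply iv_ab; auto. }
  exists x. split.
  - pose proof (Hlo 0%nat). pose proof (Hhi 0%nat). simpl in *. lra.
  - intros n Hx. pose proof (iv_spec t e n He). pose proof (Hlo (S n)). pose proof (Hhi (S n)). lra.
Qed.

Definition Cinv (q : CC) : CC :=
  (fst q / (fst q * fst q + snd q * snd q), - snd q / (fst q * fst q + snd q * snd q)).

Lemma Cinv_r q : q <> C0 -> Cmul q (Cinv q) = RtoC 1.
Proof.
  destruct q as [a b]. intros H. unfold Cinv, Cmul, RtoC; simpl.
  assert (a * a + b * b <> 0).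
  { intro E. apply H. unfold C0. f_equal; nra. }
  f_equal; field; auto.
Qed.

Lemma ExTrans B q e : q <> C0 -> 0 < e -> exists c, N1 c < e /\ ~ algebraic (Cadd B (Cmul c q)).
Proof.
  intros Hq He.
  set (t := fun n => match excluded_middle_informative (exists x, Cadd B (Cmul (RtoC x) q) = alpha n) with
                     | left H => proj1_sig (constructive_indefinite_description _ H)
                     | right _ => 0 end).
  destruct (avoid_countable t e He) as [x [Hx Ht]].
  exists (RtoC x). split.
  - unfold N1, RtoC; simpl. rewrite Rabs_R0, Rabs_right by lra. lra.
  - intros Halg. destruct (alpha_surj _ Halg) as [n Hn].
    apply (Ht n). unfold t. destruct (excluded_middle_informative _) as [H|H].
    + destruct (constructive_indefinite_description _ H) as [x' Hx']. simpl.
      rewrite Hn in Hx'.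
      assert (E : Cmul (RtoC (x - x')) q = C0).
      { assert (E2 : Cmul (RtoC x) q = Cmul (RtoC x') q).
        { destruct B, q. unfold Cadd in Hx'. injection Hx' as H1 H2. unfold Cmul, RtoC in *; simpl in *.
          f_equal; lra. }
        replace (Cmul (RtoC (x - x')) q) with (Csub (Cmul (RtoC x) q) (Cmul (RtoC x') q)) by cring.
        rewrite E2. apply Csub_self. }
      destruct (Cmul_eq0 _ _ E) as [E'|E']; [|contradiction].
      unfold RtoC, C0 in E'. injection E' as E'. lra.
    + exfalso. apply H. exists x. auto.
Qed.


Lemma gauss_alg (a b : Z) (N : nat) : (0 < N)%nat -> algebraic (IZR a / INR N, IZR b / INR N).
Proof.
  intros HN. assert (HNR : INR N <> 0) by (apply not_0_INR; lia).
  set (n := Z.of_nat N).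
  exists ((a*a+b*b)%Z :: (-2*a*n)%Z :: (n*n)%Z :: nil). split.
  - right. right. left. unfold n. lia.
  - cbn [Cpoly_eval map]. unfold Cadd, Cmul, RtoC, C0; cbn [fst snd]. unfold n.
    rewrite ?plus_IZR, ?mult_IZR, ?opp_IZR. rewrite <- INR_IZR_INZ.
    f_equal; field; auto.
Qed.

Lemma up_near (x : R) : x < IZR (up x) <= x + 1.
Proof. pose proof (archimed x). lra. Qed.

Lemma solve_lin B r q : q <> C0 -> Cadd B (Cmul (Cmul (Csub r B) (Cinv q)) q) = r.
Proof.
  intros Hq. pose proof (Cinv_r q Hq) as H. set (qi := Cinv q) in *. clearbody qi.
  replace (Cmul (Cmul (Csub r B) qi) q) with (Cmul (Csub r B) (Cmul q qi)) by cring.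
  rewrite H. cring.
Qed.

Lemma ExRat B q e : q <> C0 -> 0 < e ->
  exists c, N1 c < e /\ algebraic (Cadd B (Cmul c q)) /\ Cadd B (Cmul c q) <> C0.
Proof.
  intros Hq He.
  set (K := N1 (Cinv q)). assert (HK : 0 <= K) by apply N1_nonneg.
  destruct (INR_unbounded (3 * K / e)) as [N HN].
  assert (HK2 : 0 <= 3 * K / e) by (unfold Rdiv; apply Rmult_le_pos; [lra|left; apply Rinv_0_lt_compat; lra]).
  assert (HNp : (0 < N)%nat) by (destruct N; [simpl in HN; lra|lia]).
  assert (HNR : 0 < INR N) by (apply lt_0_INR; auto).
  set (a0 := up (INR N * fst B)).
  set (a := if Z.eq_dec a0 0 then 1%Z else a0).
  set (b := up (INR N * snd B)).
  set (r := (IZR a / INR N, IZR b / INR N)).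
  assert (Ha : Rabs (IZR a / INR N - fst B) <= 2 / INR N).
  { pose proof (up_near (INR N * fst B)) as U. fold a0 in U.
    apply Rabs_le. unfold a. destruct (Z.eq_dec a0 0) as [E|E].
    - rewrite E in U. split; apply (Rmult_le_reg_l (INR N)); auto; field_simplify; try lra; nra.
    - split; apply (Rmult_le_reg_l (INR N)); auto; field_simplify; try lra; nra. }
  assert (Hb : Rabs (IZR b / INR N - snd B) <= 1 / INR N).
  { pose proof (up_near (INR N * snd B)) as U. fold b in U.
    apply Rabs_le. split; apply (Rmult_le_reg_l (INR N)); auto; field_simplify; try lra; nra. }
  exists (Cmul (Csub r B) (Cinv q)).
  assert (Hr : Cadd B (Cmul (Cmul (Csub r B) (Cinv q)) q) = r).
  { apply solve_lin; auto. }
  rewrite Hr. split; [|split].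
  - eapply Rle_lt_trans; [apply N1_mul|]. fold K.
    assert (N1 (Csub r B) <= 3 / INR N).
    { unfold N1, Csub, Cadd, Copp, r; simpl. unfold Rminus in Ha, Hb.
      replace (3 / INR N) with (2 / INR N + 1 / INR N) by (field; lra). lra. }
    assert (3 / INR N * K < e).
    { apply (Rmult_lt_reg_r (/ e)); [apply Rinv_0_lt_compat; lra|].
      replace (e * / e) with 1 by (field; lra).
      unfold Rdiv in HN. 
      replace (3 / INR N * K * / e) with ((3 * K * / e) / INR N) by (field; split; lra).
      destruct (Req_dec K 0) as [->|HK0].
      - replace (3 * 0 * / e / INR N) with 0 by (field; split; lra). lra.
      - apply (Rmult_lt_reg_r (INR N)); auto. field_simplify; lra. }
    pose proof (N1_nonneg (Csub r B)). nra.
  - apply gauss_alg; auto.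
  - unfold r, C0. intro E. injection E as E1 E2.
    assert (IZR a = 0).
    { apply (Rmult_eq_reg_r (/ INR N)); [|apply Rinv_neq_0_compat; lra]. rewrite Rmult_0_l. exact E1. }
    apply eq_IZR in H. unfold a in H. destruct (Z.eq_dec a0 0); lia.
Qed.


Definition sch (p : nat -> CC) (k : nat) : nat := cnt p (p k) k.
Definition Pk (p : nat -> CC) (s k : nat) : list CC := derivn s (Qpoly p k).
Definition Wt (p : nat -> CC) (k : nat) : R :=
  sum_f_R0 (fun s => M0 (INR k) (Pk p s k) + M2 (INR k) (Pk p s k)) k.
Definition bnd (p : nat -> CC) (k : nat) : R := (/2)^k / (1 + Wt p k).
Definition Ev (p : nat -> CC) (l k : nat) : CC := ev (Pk p (sch p k) l) (p k).
Definition GoodV (A : CC -> Prop) (a V : CC) : Prop :=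
  (A a -> algebraic V /\ V <> C0) /\ (~ A a -> ~ algebraic V).
Definition Good (A : CC -> Prop) p k B c : Prop :=
  N1 c < bnd p k /\ GoodV A (p k) (Cadd B (Cmul c (Ev p k k))).

Lemma Wt_nonneg p k : 0 <= Wt p k.
Proof.
  unfold Wt. apply sum_nonneg. intros s.
  destruct (M_nonneg (INR k) (Pk p s k) (pos_INR k)) as [A [_ B]]. lra.
Qed.

Lemma bnd_pos p k : 0 < bnd p k.
Proof.
  unfold bnd. pose proof (Wt_nonneg p k). apply Rdiv_lt_0_compat; [apply pow_lt; lra|lra].
Qed.

Lemma Ev_kk_nz p k : Ev p k k <> C0.
Proof. unfold Ev, Pk, sch. apply Q_nonvanish. Qed.

Lemma exists_good A p k B : exists c, Good A p k B c.
Proof.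
  destruct (classic (A (p k))) as [HA|HA].
  - destruct (ExRat B (Ev p k k) (bnd p k) (Ev_kk_nz p k) (bnd_pos p k)) as [c [H1 [H2 H3]]].
    exists c. split; auto. split; [auto|intro; contradiction].
  - destruct (ExTrans B (Ev p k k) (bnd p k) (Ev_kk_nz p k) (bnd_pos p k)) as [c [H1 H2]].
    exists c. split; auto. split; [intro; contradiction|auto].
Qed.

Definition Bpre p (pre : list CC) : CC :=
  lsum (fun l => Cmul (nth l pre C0) (Ev p l (length pre))) (length pre).

Definition gstep A p (pre : list CC) : CC :=
  proj1_sig (constructive_indefinite_description _ (exists_good A p (length pre) (Bpre p pre))).

Fixpoint prefix A p (n : nat) : list CC :=
  match n with O => nil | S n => prefix A p n ++ gstep A p (prefix A p n) :: nil end.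

Definition cc A p k := gstep A p (prefix A p k).

Lemma prefix_length A p k : length (prefix A p k) = k.
Proof. induction k; simpl; [reflexivity|]. rewrite length_app, IHk. simpl. lia. Qed.

Lemma prefix_nth A p k l : (l < k)%nat -> nth l (prefix A p k) C0 = cc A p l.
Proof.
  induction k as [|k IH]; intros Hl; [lia|]. simpl.
  destruct (Nat.eq_dec l k) as [->|Hne].
  - rewrite app_nth2 by (rewrite prefix_length; lia). rewrite prefix_length, Nat.sub_diag. reflexivity.
  - rewrite app_nth1 by (rewrite prefix_length; lia). apply IH. lia.
Qed.

Definition Bk A p k := lsum (fun l => Cmul (cc A p l) (Ev p l k)) k.

Lemma lsum_ext f g n : (forall l, (l < n)%nat -> f l = g l) -> lsum f n = lsum g n.
Proof.
  induction n; intros H; simpl; [reflexivity|].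
  rewrite IHn by (intros; apply H; lia). rewrite H by lia. reflexivity.
Qed.

Lemma cc_good A p k : Good A p k (Bk A p k) (cc A p k).
Proof.
  unfold cc, gstep.
  destruct (constructive_indefinite_description _ _) as [c Hc]. simpl.
  rewrite prefix_length in Hc. unfold Bpre in Hc. rewrite prefix_length in Hc.
  unfold Bk. erewrite lsum_ext; [exact Hc|]. intros l Hl. simpl. rewrite prefix_nth; auto.
Qed.

Definition D A p (s : nat) (z : CC) : CC := CSum (fun k => Cmul (cc A p k) (ev (Pk p s k) z)).

Lemma term_bound A p s k r : (s <= k)%nat -> 0 <= r -> r <= INR k ->
  N1 (cc A p k) * M0 r (Pk p s k) <= (/2)^k /\ N1 (cc A p k) * M2 r (Pk p s k) <= (/2)^k.
Proof.
  intros Hs Hr Hrk.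
  destruct (M_mono r (INR k) (Pk p s k) Hr Hrk) as [A0 [_ A2]].
  destruct (M_nonneg r (Pk p s k) Hr) as [B0 [_ B2]].
  assert (HW : M0 (INR k) (Pk p s k) + M2 (INR k) (Pk p s k) <= Wt p k).
  { unfold Wt. apply (term_le_sum (fun s => M0 (INR k) (Pk p s k) + M2 (INR k) (Pk p s k))); auto.
    intros j. destruct (M_nonneg (INR k) (Pk p j k) (pos_INR k)) as [C0' [_ C2]]. lra. }
  destruct (cc_good A p k) as [Hc _].
  pose proof (Wt_nonneg p k). pose proof (N1_nonneg (cc A p k)).
  assert (Hp : 0 < (/2)^k) by (apply pow_lt; lra).
  assert (N1 (cc A p k) * Wt p k <= (/2)^k).
  { unfold bnd in Hc. apply Rlt_le in Hc.
    apply (Rmult_le_compat_r (1 + Wt p k)) in Hc; [|lra].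
    replace ((/2)^k / (1 + Wt p k) * (1 + Wt p k)) with ((/2)^k) in Hc by (field; lra). nra. }
  split; nra.
Qed.

Lemma exists_nat_ge r : exists N, r <= INR N.
Proof. destruct (INR_unbounded r) as [N HN]. exists N. lra. Qed.

Lemma D_conv A p s z : Cconv (fun k => Cmul (cc A p k) (ev (Pk p s k) z)).
Proof.
  destruct (exists_nat_ge (N1 z)) as [N HN].
  apply (Cconv_eventually _ (Nat.max s N)). intros k Hk.
  eapply Rle_trans; [apply N1_mul|].
  pose proof (bound0 (N1 z) (Pk p s k) z (Rle_refl _)).
  assert (INR N <= INR k) by (apply le_INR; lia).
  destruct (term_bound A p s k (N1 z) ltac:(lia) (N1_nonneg z) ltac:(lra)) as [T _].
  pose proof (N1_nonneg (cc A p k)). nra.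
Qed.

Lemma D_deriv A p s z : has_cderiv (D A p s) z (D A p (S s) z).
Proof.
  set (r := N1 z + 1).
  set (t := fun k => N1 (cc A p k) * M2 r (Pk p s k)).
  assert (Ht : conv t).
  { destruct (exists_nat_ge r) as [N HN].
    apply (conv_eventually _ (Nat.max s N)). intros k Hk.
    assert (INR N <= INR k) by (apply le_INR; lia).
    pose proof (N1_nonneg z).
    destruct (term_bound A p s k r ltac:(lia) ltac:(unfold r; lra) ltac:(lra)) as [_ T].
    unfold t. rewrite Rabs_right; [auto|].
    pose proof (N1_nonneg (cc A p k)). destruct (M_nonneg r (Pk p s k) ltac:(unfold r; lra)) as [_ [_ X]].
    apply Rle_ge. apply Rmult_le_pos; auto. }
  set (T := rsum t).
  assert (HT : 0 <= T).
  { apply rsum_nonneg; auto. intros k. unfold t. pose proof (N1_nonneg (cc A p k)).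
    destruct (M_nonneg r (Pk p s k) ltac:(pose proof (N1_nonneg z); unfold r; lra)) as [_ [_ X]].
    apply Rmult_le_pos; auto. }
  intros eps Heps.
  exists (Rmin (1/2) (eps / (8 * T + 1))). split.
  { apply Rmin_pos; [lra|]. apply Rdiv_lt_0_compat; lra. }
  intros h Hh.
  assert (Hh1 : Cmod h < 1/2) by (pose proof (Rmin_l (1/2) (eps / (8 * T + 1))); lra).
  assert (Hh2 : Cmod h < eps / (8 * T + 1)) by (pose proof (Rmin_r (1/2) (eps / (8 * T + 1))); lra).
  pose proof (N1_le_Cmod h) as Hn.
  assert (Hhr : N1 z + N1 h <= r) by (unfold r; lra).
  set (u1 := fun k => Cmul (cc A p k) (ev (Pk p s k) (Cadd z h))).
  set (u0 := fun k => Cmul (cc A p k) (ev (Pk p s k) z)).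
  set (u2 := fun k => Cmul (cc A p k) (ev (Pk p (S s) k) z)).
  destruct (CSum_sub u1 u0 (D_conv A p s _) (D_conv A p s _)) as [C1 E1].
  destruct (CSum_mulr u2 h (D_conv A p (S s) _)) as [C2 E2].
  destruct (CSum_sub _ _ C1 C2) as [C3 E3].
  unfold D. fold u1 u0 u2. rewrite <- E1, <- E2, <- E3.
  set (a := N1 h * N1 h).
  destruct (rsum_lin a 0 t t Ht Ht) as [C4 E4].
  assert (HB : N1 (CSum (fun k => Csub (Csub (u1 k) (u0 k)) (Cmul (u2 k) h))) <= 2 * (a * T)).
  { replace (a * T) with (a * rsum t + 0 * rsum t) by (unfold T; ring). rewrite <- E4.
    apply CSum_bound; auto. intros k. unfold u1, u0, u2.
    replace (Csub (Csub (Cmul (cc A p k) (ev (Pk p s k) (Cadd z h))) (Cmul (cc A p k) (ev (Pk p s k) z)))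
       (Cmul (Cmul (cc A p k) (ev (Pk p (S s) k) z)) h))
      with (Cmul (cc A p k) (Csub (Csub (ev (Pk p s k) (Cadd z h)) (ev (Pk p s k) z))
                                  (Cmul (ev (deriv (Pk p s k)) z) h))) by (simpl; cring).
    eapply Rle_trans; [apply N1_mul|].
    pose proof (bound2 r (Pk p s k) z h Hhr).
    pose proof (N1_nonneg (cc A p k)).
    unfold t, a. nra. }
  eapply Rle_trans; [apply Cmod_le_N1|]. eapply Rle_trans; [exact HB|].
  unfold a. pose proof (N1_nonneg h). assert (0 <= Cmod h) by (unfold Cmod; apply sqrt_pos).
  assert (N1 h * N1 h <= 4 * (Cmod h * Cmod h)) by nra.
  assert (8 * T * Cmod h <= eps).
  { apply Rlt_le in Hh2. apply (Rmult_le_compat_l (8 * T + 1)) in Hh2; [|lra].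
    replace ((8 * T + 1) * (eps / (8 * T + 1))) with eps in Hh2 by (field; lra). nra. }
  nra.
Qed.


Definition sched (k : nat) : CC := alpha (fst (Cantor.of_nat k)).

Lemma cnt_ge a m : alpha m = a -> forall t, (S t <= cnt sched a (S (Cantor.to_nat (m, t))))%nat.
Proof.
  intros Ha.
  assert (Hs : forall t, sched (Cantor.to_nat (m, t)) = a).
  { intros t. unfold sched. rewrite cancel_of_to. exact Ha. }
  induction t as [|t IH].
  - cbn [cnt]. destruct (Ceq_dec (sched (Cantor.to_nat (m, 0%nat))) a) as [_|E]; [lia|].
    exfalso; apply E; apply Hs.
  - cbn [cnt]. destruct (Ceq_dec (sched (Cantor.to_nat (m, S t))) a) as [_|E];
      [|exfalso; apply E; apply Hs].
    assert (Hlt : (Cantor.to_nat (m, t) < Cantor.to_nat (m, S t))%nat).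
    { pose proof (to_nat_spec m t). pose proof (to_nat_spec m (S t)). nia. }
    pose proof (cnt_mono sched a (S (Cantor.to_nat (m, t))) (Cantor.to_nat (m, S t)) Hlt). lia.
Qed.

Lemma cnt_ivt a s K : (s < cnt sched a K)%nat -> exists n, (n < K)%nat /\ cnt sched a n = s /\ sched n = a.
Proof.
  induction K as [|K IH]; simpl; intros H; [lia|].
  destruct (Nat.lt_ge_cases s (cnt sched a K)) as [H1|H1].
  - destruct (IH H1) as [n [Hn1 Hn2]]. exists n. split; [lia|auto].
  - destruct (Ceq_dec (sched K) a) as [E|E]; [|lia].
    exists K. split; [lia|split; [lia|auto]].
Qed.

Lemma cover a s : algebraic a -> exists k, sched k = a /\ sch sched k = s.
Proof.
  intros Ha. destruct (alpha_surj a Ha) as [m Hm].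
  pose proof (cnt_ge a m Hm s) as H.
  destruct (cnt_ivt a s _ H) as [n [_ [Hn1 Hn2]]].
  exists n. split; auto. unfold sch. rewrite Hn2. auto.
Qed.

Lemma D_value A k : D A sched (sch sched k) (sched k) =
  Cadd (Bk A sched k) (Cmul (cc A sched k) (Ev sched k k)).
Proof.
  unfold D. rewrite (CSum_finite _ k).
  - reflexivity.
  - intros l Hl. unfold Pk, sch. rewrite Q_vanish by auto. apply Cmul_0_r.
Qed.

Lemma C0_alg : algebraic C0.
Proof.
  exists (0%Z :: 1%Z :: nil). split.
  - right. left. lia.
  - cbn [Cpoly_eval map]. unfold Cadd, Cmul, RtoC, C0; cbn [fst snd]. f_equal; ring.
Qed.

Lemma derivn_nil n : derivn n nil = nil.
Proof. induction n; [reflexivity|]. unfold derivn in *. simpl. rewrite IHn. reflexivity. Qed.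

Lemma eval_derivn_shift s x z :
  ev (derivn (S s) (C0 :: x)) z =
  Cadd (Cmul (RtoC (INR (S s))) (ev (derivn s x) z)) (Cmul z (ev (derivn (S s) x) z)).
Proof.
  revert x; induction s as [|s IH]; intros x.
  - simpl. rewrite eval_ladd. simpl. cring.
  - rewrite derivn_S. change (deriv (C0 :: x)) with (ladd x (C0 :: deriv x)).
    rewrite eval_derivn_ladd, IH. rewrite <- !derivn_S. rewrite (S_INR (S s)). cring.
Qed.

Lemma derivn_high l : forall n, (length l <= n)%nat -> forall z, ev (derivn n l) z = C0.
Proof.
  induction l as [|a l IH]; intros n Hn z.
  - rewrite derivn_nil. reflexivity.
  - destruct n as [|m]; simpl in Hn; [lia|].
    rewrite derivn_S. change (deriv (a :: l)) with (ladd l (C0 :: deriv l)).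
    rewrite eval_derivn_ladd, IH by lia. rewrite Cadd_0_l.
    destruct m as [|m'].
    + assert (l = nil) by (destruct l; [auto|simpl in Hn; lia]). subst. simpl. cring.
    + rewrite eval_derivn_shift. rewrite <- !derivn_S. rewrite !IH by lia. cring.
Qed.

Lemma N1_zero x : N1 x = 0 -> x = C0.
Proof.
  destruct x as [a b]. unfold N1, C0; simpl. intros H.
  pose proof (Rabs_pos a). pose proof (Rabs_pos b).
  assert (Rabs a = 0) by lra. assert (Rabs b = 0) by lra.
  pose proof (Rle_abs a). pose proof (Rle_abs (-a)). pose proof (Rle_abs b). pose proof (Rle_abs (-b)).
  rewrite !Rabs_Ropp in *. f_equal; lra.
Qed.

Lemma cderiv_unique g z l1 l2 : has_cderiv g z l1 -> has_cderiv g z l2 -> l1 = l2.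
Proof.
  intros H1 H2. apply NNPP. intro Hne.
  set (d := N1 (Csub l1 l2)).
  assert (Hd : 0 < d).
  { pose proof (N1_nonneg (Csub l1 l2)). destruct (Req_dec d 0) as [E|E]; [|unfold d in *; lra].
    exfalso. apply Hne. apply N1_zero in E. destruct l1, l2. unfold Csub, Cadd, Copp, C0 in E.
    injection E as E1 E2. f_equal; lra. }
  destruct (H1 (d/8) ltac:(lra)) as [d1 [Hd1 K1]].
  destruct (H2 (d/8) ltac:(lra)) as [d2 [Hd2 K2]].
  set (t := Rmin d1 d2 / 2).
  assert (Ht : 0 < t) by (unfold t; pose proof (Rmin_pos _ _ Hd1 Hd2); lra).
  assert (Ht1 : t < d1) by (unfold t; pose proof (Rmin_l d1 d2); pose proof (Rmin_pos _ _ Hd1 Hd2); lra).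
  assert (Ht2 : t < d2) by (unfold t; pose proof (Rmin_r d1 d2); pose proof (Rmin_pos _ _ Hd1 Hd2); lra).
  set (h := RtoC t).
  assert (Hch : Cmod h = t).
  { unfold Cmod, h, RtoC; simpl. replace (t * t + 0 * 0) with (t * t) by ring. apply sqrt_square. lra. }
  specialize (K1 h ltac:(lra)). specialize (K2 h ltac:(lra)).
  set (E1 := Csub (Csub (g (Cadd z h)) (g z)) (Cmul l1 h)) in *.
  set (E2 := Csub (Csub (g (Cadd z h)) (g z)) (Cmul l2 h)) in *.
  assert (E : Cmul (Csub l1 l2) h = Csub E2 E1) by (unfold E1, E2; cring).
  assert (HN : N1 (Cmul (Csub l1 l2) h) = d * t).
  { unfold h, d, N1, RtoC, Cmul; simpl. rewrite !Rmult_0_r, Rminus_0_r, Rplus_0_l.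
    rewrite !Rabs_mult, (Rabs_right t) by lra. ring. }
  rewrite E in HN. pose proof (N1_sub E2 E1). pose proof (N1_le_Cmod E1). pose proof (N1_le_Cmod E2).
  rewrite Hch in K1, K2. nra.
Qed.

Lemma poly_deriv l z : has_cderiv (ev l) z (ev (deriv l) z).
Proof.
  set (r := N1 z + 1). set (M := M2 r l).
  assert (HM : 0 <= M) by (destruct (M_nonneg r l ltac:(pose proof (N1_nonneg z); unfold r; lra)) as [_ [_ X]]; exact X).
  intros eps Heps. exists (Rmin (1/2) (eps / (4 * M + 1))). split.
  { apply Rmin_pos; [lra|]. apply Rdiv_lt_0_compat; lra. }
  intros h Hh.
  assert (Hh1 : Cmod h < 1/2) by (pose proof (Rmin_l (1/2) (eps / (4 * M + 1))); lra).
  assert (Hh2 : Cmod h < eps / (4 * M + 1)) by (pose proof (Rmin_r (1/2) (eps / (4 * M + 1))); lra).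
  pose proof (N1_le_Cmod h) as Hn.
  assert (Hhr : N1 z + N1 h <= r) by (unfold r; lra).
  pose proof (bound2 r l z h Hhr) as B. fold M in B.
  eapply Rle_trans; [apply Cmod_le_N1|]. eapply Rle_trans; [exact B|].
  pose proof (N1_nonneg h). assert (0 <= Cmod h) by (unfold Cmod; apply sqrt_pos).
  assert (N1 h * N1 h <= 4 * (Cmod h * Cmod h)) by nra.
  assert (4 * M * Cmod h <= eps).
  { apply Rlt_le in Hh2. apply (Rmult_le_compat_l (4 * M + 1)) in Hh2; [|lra].
    replace ((4 * M + 1) * (eps / (4 * M + 1))) with eps in Hh2 by (field; lra). nra. }
  nra.
Qed.

Theorem theorem2 :
  forall A : CC -> Prop,
    (forall z, A z -> algebraic z) ->
    exists (f : CC -> CC) (D : nat -> CC -> CC),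
      transcendental_entire f /\
      derivative_sequence f D /\
      forall (s : nat) (alpha : CC), exceptional_set (D s) alpha <-> A alpha.
Proof.
  intros A HA.
  assert (Hval : forall s a, algebraic a ->
     (A a -> algebraic (D A sched s a) /\ D A sched s a <> C0) /\
     (~ A a -> ~ algebraic (D A sched s a))).
  { intros s a Ha. destruct (cover a s Ha) as [k [Hk1 Hk2]].
    pose proof (D_value A k) as V. rewrite Hk1, Hk2 in V. rewrite V.
    destruct (cc_good A sched k) as [_ G]. rewrite Hk1 in G. exact G. }
  exists (D A sched 0%nat), (D A sched).
  split; [split|split].
  - intros z. exists (D A sched 1%nat z). apply D_deriv.
  - intros [L HL].
    assert (HD : forall s z, D A sched s z = ev (derivn s L) z).
    { induction s as [|s IH]; intros z; [apply HL|].
      assert (E : D A sched s = ev (derivn s L)) by (apply functional_extensionality; auto).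
      pose proof (D_deriv A sched s z) as H1. rewrite E in H1.
      pose proof (poly_deriv (derivn s L) z) as H2.
      apply (cderiv_unique _ _ _ _ H1 H2). }
    destruct (Hval (length L) C0 C0_alg) as [V1 V2].
    rewrite HD, derivn_high in V1, V2 by lia.
    destruct (classic (A C0)) as [HA0|HA0].
    + destruct (V1 HA0) as [_ X]. apply X; reflexivity.
    + apply (V2 HA0). apply C0_alg.
  - split; [reflexivity|]. intros s z. apply D_deriv.
  - intros s a. split.
    + intros [Ha Hd]. apply NNPP. intro HnA. destruct (Hval s a Ha) as [_ X]. exact (X HnA Hd).
    + intros HAa. split; [apply HA; auto|]. destruct (Hval s a (HA a HAa)) as [X _]. apply X; auto.
Qed.
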